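(* Let $I$ be a real closed interval and let $[a,b]$ be a closed subinterval of $I$. A standard function $F\colon I^*\to\mathbb{R}$ satisfies: $F$ is preassociative and unarily quasi-range-idempotent, there exists a continuous and strictly increasing function $f\colon[a,b]\to\mathbb{R}$ such that $F_1(x)=f(\mathrm{med}(a,x,b))$ for all $x\in I$, and $F_2$ is continuous, symmetric, nondecreasing in each argument and satisfies $F_2(x,x)=F_1(x)$ for every $x\in I$, if and only if there exist $c\in[a,b]$ and a continuous and strictly increasing function $f\colon[a,b]\to\mathbb{R}$ such that $$F_n(x_1,\ldots,x_n)=f\Big(\mathrm{med}\Big(a,\,\mathrm{med}\Big(\min_{1\leqslant i\leqslant n} x_i,\,c,\,\max_{1\leqslant i\leqslant n} x_i\Big),\,b\Big)\Big),\qquad n\geqslant 1.$$ In this case $f=F_1|_{[a,b]}$.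
   Context: $I^*=\bigcup_{n\geqslant 0}I^n$ is the set of finite tuples over $I$, $I^0=\{\varepsilon\}$ with $\varepsilon$ the empty tuple; $F(\mathbf{x},\mathbf{y})$ denotes $F$ applied to the concatenation, concatenation with $\varepsilon$ leaving tuples unchanged. $F_n=F|_{I^n}$, $F^{\flat}=F|_{I^*\setminus\{\varepsilon\}}$. $F$ is standard if $F(\mathbf{x})=F(\varepsilon)$ only for $\mathbf{x}=\varepsilon$. $F$ is preassociative if for all tuples $\mathbf{x},\mathbf{y},\mathbf{y}',\mathbf{z}$, $F(\mathbf{y})=F(\mathbf{y}')$ implies $F(\mathbf{x},\mathbf{y},\mathbf{z})=F(\mathbf{x},\mathbf{y}',\mathbf{z})$. $F$ is unarily quasi-range-idempotent if $\mathrm{ran}(F_1)=\mathrm{ran}(F^{\flat})$. $\mathrm{med}(x,y,z)$ denotes the median of three reals. *)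

(* Defs.v *)
From Stdlib Require Import Reals Lra List.
Import ListNotations.
Open Scope R_scope.

Definition med (x y z : R) : R := Rmax (Rmin x y) (Rmin (Rmax x y) z).

Definition inI (p q x : R) : Prop := p <= x <= q.

Definition tupI (p q : R) (l : list R) : Prop := Forall (inI p q) l.

Definition lmin (x0 : R) (xs : list R) : R := fold_left Rmin xs x0.
Definition lmax (x0 : R) (xs : list R) : R := fold_left Rmax xs x0.

Definition standard (p q : R) (F : list R -> R) : Prop :=
  forall x, tupI p q x -> F x = F [] -> x = [].

Definition preassociative (p q : R) (F : list R -> R) : Prop :=
  forall x y y' z, tupI p q x -> tupI p q y -> tupI p q y' -> tupI p q z ->
    F y = F y' -> F (x ++ y ++ z) = F (x ++ y' ++ z).

Definition unarily_qri (p q : R) (F : list R -> R) : Prop :=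
  forall v, (exists x, inI p q x /\ F [x] = v) <->
            (exists l, tupI p q l /\ l <> [] /\ F l = v).

Definition cont_on (a b : R) (f : R -> R) : Prop :=
  forall x, inI a b x -> forall eps, 0 < eps -> exists delta, 0 < delta /\
    forall y, inI a b y -> Rabs (y - x) < delta -> Rabs (f y - f x) < eps.

Definition strict_incr_on (a b : R) (f : R -> R) : Prop :=
  forall x y, inI a b x -> inI a b y -> x < y -> f x < f y.

Definition F2_cont (p q : R) (F : list R -> R) : Prop :=
  forall x1 x2, inI p q x1 -> inI p q x2 -> forall eps, 0 < eps ->
    exists delta, 0 < delta /\ forall y1 y2, inI p q y1 -> inI p q y2 ->
      Rabs (y1 - x1) < delta -> Rabs (y2 - x2) < delta ->
      Rabs (F [y1; y2] - F [x1; x2]) < eps.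

Definition F2_symmetric (p q : R) (F : list R -> R) : Prop :=
  forall x y, inI p q x -> inI p q y -> F [x; y] = F [y; x].

Definition F2_nondecr (p q : R) (F : list R -> R) : Prop :=
  (forall x x' y, inI p q x -> inI p q x' -> inI p q y -> x <= x' ->
     F [x; y] <= F [x'; y]) /\
  (forall x y y', inI p q x -> inI p q y -> inI p q y' -> y <= y' ->
     F [x; y] <= F [x; y']).

Definition med_repr (p q a b : R) (F : list R -> R) (c : R) (f : R -> R) : Prop :=
  inI a b c /\ cont_on a b f /\ strict_incr_on a b f /\
  forall x0 xs, tupI p q (x0 :: xs) ->
    F (x0 :: xs) = f (med a (med (lmin x0 xs) c (lmax x0 xs)) b).

(* Main.v *)
Require Import Defs.
From Stdlib Require Import Reals Lra List.
Import ListNotations.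
Open Scope R_scope.

Ltac atomic x := lazymatch x with
  | context [Rmin _ _] => fail | context [Rmax _ _] => fail | _ => idtac end.

Ltac mm1 := match goal with
  | |- context [Rmin ?x ?y] => atomic x; atomic y; destruct (Rle_dec x y) as [?h|?h];
       [ rewrite (Rmin_left x y) in * by lra | rewrite (Rmin_right x y) in * by lra ]
  | |- context [Rmax ?x ?y] => atomic x; atomic y; destruct (Rle_dec x y) as [?h|?h];
       [ rewrite (Rmax_right x y) in * by lra | rewrite (Rmax_left x y) in * by lra ]
  | H : context [Rmin ?x ?y] |- _ => atomic x; atomic y; destruct (Rle_dec x y) as [?h|?h];
       [ rewrite (Rmin_left x y) in * by lra | rewrite (Rmin_right x y) in * by lra ]
  | H : context [Rmax ?x ?y] |- _ => atomic x; atomic y; destruct (Rle_dec x y) as [?h|?h];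
       [ rewrite (Rmax_right x y) in * by lra | rewrite (Rmax_left x y) in * by lra ]
  end; try (exfalso; lra).

Ltac mm := unfold med in *; repeat mm1; try lra.

Definition B (c x y : R) := med (Rmin x y) c (Rmax x y).

Lemma L3 a b c x y : a <= c <= b -> a <= b ->
  med a (B c x y) b = med a (B c (med a x b) (med a y b)) b.
Proof. unfold B. intros. mm. Qed.

Lemma L2 c x0 x1 mu nu :
  med (Rmin (B c x0 x1) mu) c (Rmax (B c x0 x1) nu) =
  med (Rmin (Rmin x0 x1) mu) c (Rmax (Rmax x0 x1) nu).
Proof. unfold B. intros. mm. Qed.

Lemma L1 a b c m M m' M' u v : a <= c <= b -> m <= M -> m' <= M' -> u <= v ->
  med a (med m c M) b = med a (med m' c M') b ->
  med a (med (Rmin u m) c (Rmax v M)) b = med a (med (Rmin u m') c (Rmax v M')) b.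
Proof. intros. mm. Qed.

Lemma med_id x c : med x c x = x.
Proof. mm. Qed.
Lemma med_in a b x : a <= x <= b -> med a x b = x.
Proof. intros. mm. Qed.
Lemma med_bnd a b x : a <= b -> a <= med a x b <= b.
Proof. intros. mm. Qed.
Lemma med_bnd3 p q x y z : p <= x <= q -> p <= y <= q -> p <= z <= q -> p <= med x y z <= q.
Proof. intros. mm. Qed.
Lemma B_sym c x y : B c x y = B c y x.
Proof. unfold B. rewrite Rmin_comm, Rmax_comm. reflexivity. Qed.
Lemma min_bnd p q x y : p <= x <= q -> p <= y <= q -> p <= Rmin x y <= q.
Proof. intros. mm. Qed.
Lemma max_bnd p q x y : p <= x <= q -> p <= y <= q -> p <= Rmax x y <= q.
Proof. intros. mm. Qed.

Lemma min_lip a1 a2 b1 b2 d : Rabs (a1 - a2) < d -> Rabs (b1 - b2) < d ->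
  Rabs (Rmin a1 b1 - Rmin a2 b2) < d.
Proof. intros H1 H2. apply Rabs_def2 in H1; apply Rabs_def2 in H2. apply Rabs_def1; mm. Qed.
Lemma max_lip a1 a2 b1 b2 d : Rabs (a1 - a2) < d -> Rabs (b1 - b2) < d ->
  Rabs (Rmax a1 b1 - Rmax a2 b2) < d.
Proof. intros H1 H2. apply Rabs_def2 in H1; apply Rabs_def2 in H2. apply Rabs_def1; mm. Qed.
Lemma med_lip x1 x2 y1 y2 z1 z2 d : Rabs (x1 - x2) < d -> Rabs (y1 - y2) < d ->
  Rabs (z1 - z2) < d -> Rabs (med x1 y1 z1 - med x2 y2 z2) < d.
Proof. intros. unfold med. auto using min_lip, max_lip. Qed.
Lemma const_lip a d : 0 < d -> Rabs (a - a) < d.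
Proof. intros. rewrite Rminus_diag, Rabs_R0. exact H. Qed.

Lemma K_mono1 a b c x x' y : a <= c <= b -> x <= x' -> med a (B c x y) b <= med a (B c x' y) b.
Proof. unfold B; intros; mm. Qed.
Lemma K_mono2 a b c x y y' : a <= c <= b -> y <= y' -> med a (B c x y) b <= med a (B c x y') b.
Proof. unfold B; intros; mm. Qed.

Lemma fold_min_comm l u v : fold_left Rmin l (Rmin u v) = Rmin u (fold_left Rmin l v).
Proof. revert v. induction l as [|x l IH]; intros v; simpl; auto.
  rewrite <- Rmin_assoc. apply IH. Qed.
Lemma fold_max_comm l u v : fold_left Rmax l (Rmax u v) = Rmax u (fold_left Rmax l v).
Proof. revert v. induction l as [|x l IH]; intros v; simpl; auto.
  rewrite <- Rmax_assoc. apply IH. Qed.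
Lemma lmin_cons u y ys : lmin u (y :: ys) = Rmin u (lmin y ys).
Proof. unfold lmin. simpl. apply fold_min_comm. Qed.
Lemma lmax_cons u y ys : lmax u (y :: ys) = Rmax u (lmax y ys).
Proof. unfold lmax. simpl. apply fold_max_comm. Qed.
Lemma lmin_app x0 xs y0 ys : lmin x0 (xs ++ y0 :: ys) = Rmin (lmin x0 xs) (lmin y0 ys).
Proof. unfold lmin. rewrite fold_left_app. simpl. apply fold_min_comm. Qed.
Lemma lmax_app x0 xs y0 ys : lmax x0 (xs ++ y0 :: ys) = Rmax (lmax x0 xs) (lmax y0 ys).
Proof. unfold lmax. rewrite fold_left_app. simpl. apply fold_max_comm. Qed.
Lemma lmin_le x0 xs : lmin x0 xs <= x0.
Proof. revert x0; induction xs as [|y ys IH]; intros x0. unfold lmin; simpl; lra.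
  rewrite lmin_cons. apply Rmin_l. Qed.
Lemma lmax_ge x0 xs : x0 <= lmax x0 xs.
Proof. revert x0; induction xs as [|y ys IH]; intros x0. unfold lmax; simpl; lra.
  rewrite lmax_cons. apply Rmax_l. Qed.
Lemma lmin_lmax x0 xs : lmin x0 xs <= lmax x0 xs.
Proof. pose proof (lmin_le x0 xs); pose proof (lmax_ge x0 xs); lra. Qed.
Lemma lmin_in p q x0 xs : tupI p q (x0 :: xs) -> inI p q (lmin x0 xs).
Proof. revert x0; induction xs as [|y ys IH]; intros x0 Ht; inversion Ht; subst.
  exact H1. rewrite lmin_cons. apply min_bnd; [exact H1 | apply (IH y H2)]. Qed.
Lemma lmax_in p q x0 xs : tupI p q (x0 :: xs) -> inI p q (lmax x0 xs).
Proof. revert x0; induction xs as [|y ys IH]; intros x0 Ht; inversion Ht; subst.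
  exact H1. rewrite lmax_cons. apply max_bnd; [exact H1 | apply (IH y H2)]. Qed.

Lemma ivt l r g v : l <= r -> cont_on l r g -> g l <= v <= g r ->
  exists s, inI l r s /\ g s = v.
Proof.
  intros Hlr Hc [H1 H2].
  destruct (Req_dec (g l) v) as [E|E]. { exists l; split; [split; lra|exact E]. }
  destruct (Req_dec (g r) v) as [E'|E']. { exists r; split; [split; lra|exact E']. }
  assert (Hlt : l < r).
  { destruct (Req_dec l r) as [El|El]; [subst; lra | lra]. }
  set (h := fun s => g (med l s r) - v).
  assert (Hh : continuity h).
  { intros x. unfold continuity_pt, continue_in, limit1_in, limit_in. intros eps Heps.
    destruct (Hc (med l x r) (med_bnd l r x Hlr) eps Heps) as [d [Hd Hd']].
    exists d; split; auto. intros x' [_ Hx']. simpl in *. unfold Rdist in *.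
    unfold h. replace (g (med l x' r) - v - (g (med l x r) - v))
      with (g (med l x' r) - g (med l x r)) by ring.
    apply Hd'. apply med_bnd; auto. apply med_lip; auto using const_lip. }
  destruct (IVT h l r Hh Hlt) as [z [Hz Hz0]].
  { unfold h; rewrite med_in by lra; lra. }
  { unfold h; rewrite med_in by lra; lra. }
  exists (med l z r). split. apply med_bnd; lra. unfold h in Hz0. lra.
Qed.

Lemma tupI_app p q l1 l2 : tupI p q l1 -> tupI p q l2 -> tupI p q (l1 ++ l2).
Proof. unfold tupI; intros; apply Forall_app; split; auto. Qed.
Lemma tupI_app_inv p q l1 l2 : tupI p q (l1 ++ l2) -> tupI p q l1 /\ tupI p q l2.
Proof. unfold tupI; intros; apply Forall_app; auto. Qed.
Lemma tup1 p q x : inI p q x -> tupI p q [x].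
Proof. intros; constructor; [exact H|constructor]. Qed.
Lemma tup2 p q x y : inI p q x -> inI p q y -> tupI p q [x; y].
Proof. intros; constructor; [exact H|apply tup1; exact H0]. Qed.

Lemma fmono a b f u v : strict_incr_on a b f -> inI a b u -> inI a b v -> u <= v -> f u <= f v.
Proof. intros Hs hu hv huv. destruct (Rle_lt_or_eq_dec u v huv) as [h|h].
  left; apply Hs; auto. subst; lra. Qed.
Lemma finj a b f u v : strict_incr_on a b f -> inI a b u -> inI a b v -> f u = f v -> u = v.
Proof. intros Hs hu hv e. destruct (Rtotal_order u v) as [h|[h|h]]; auto.
  - specialize (Hs u v hu hv h); lra.
  - specialize (Hs v u hv hu h); lra. Qed.

Lemma B_diag c x : B c x x = x.
Proof. unfold B. mm. Qed.
Lemma min3 x y z : Rmin x (Rmin y z) = Rmin (Rmin x z) y.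
Proof. mm. Qed.
Lemma max3 x y z : Rmax x (Rmax y z) = Rmax (Rmax x z) y.
Proof. mm. Qed.
Lemma minmax4 a b c d : a <= b -> c <= d -> Rmin a c <= Rmax b d.
Proof. intros; mm. Qed.

Lemma backward p q a b F c f : p <= a -> a <= b -> b <= q -> standard p q F ->
  med_repr p q a b F c f ->
  (preassociative p q F /\ unarily_qri p q F /\
    (exists f : R -> R, cont_on a b f /\ strict_incr_on a b f /\
       forall x, inI p q x -> F [x] = f (med a x b)) /\
    F2_cont p q F /\ F2_symmetric p q F /\ F2_nondecr p q F /\
    (forall x, inI p q x -> F [x; x] = F [x])).
Proof.
  intros hpa hab hbq Hstd [hc [Hcont [Hs Hr]]].
  assert (Hr1 : forall x, inI p q x -> F [x] = f (med a x b)).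
  { intros x hx. rewrite Hr by (apply tup1; exact hx). unfold lmin, lmax; simpl.
    rewrite med_id. reflexivity. }
  assert (Hr2 : forall x y, inI p q x -> inI p q y -> F [x; y] = f (med a (B c x y) b)).
  { intros x y hx hy. rewrite Hr by (apply tup2; auto). unfold lmin, lmax; simpl.
    reflexivity. }
  assert (hcI : a <= c <= b) by exact hc.
  assert (Lab : forall m M, a <= med a (med m c M) b <= b) by (intros; apply med_bnd; lra).
  split; [|split; [|split; [|split; [|split; [|split]]]]].
  - intros x y y' z hx hy hy' hz e.
    destruct y as [|y0 ys]; destruct y' as [|y0' ys'].
    + reflexivity.
    + exfalso. assert (y0' :: ys' = []) by (apply Hstd; [exact hy' | symmetry; exact e]).
      discriminate.
    + exfalso. assert (y0 :: ys = []) by (apply Hstd; [exact hy | exact e]).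
      discriminate.
    + pose proof e as e0.
      rewrite !Hr in e by assumption.
      apply (finj a b f) in e; [| exact Hs | apply Lab | apply Lab].
      pose proof (lmin_lmax y0 ys). pose proof (lmin_lmax y0' ys').
      destruct x as [|x0 xs]; destruct z as [|z0 zs].
      * simpl. rewrite !app_nil_r. exact e0.
      * pose proof (lmin_lmax z0 zs).
        simpl. rewrite Hr by exact (tupI_app _ _ _ _ hy hz).
        rewrite Hr by exact (tupI_app _ _ _ _ hy' hz).
        rewrite !lmin_app, !lmax_app. f_equal.
        rewrite (Rmin_comm (lmin y0 ys)), (Rmax_comm (lmax y0 ys)).
        rewrite (Rmin_comm (lmin y0' ys')), (Rmax_comm (lmax y0' ys')).
        apply L1; auto.
      * pose proof (lmin_lmax x0 xs).
        rewrite !app_nil_r. simpl.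
        rewrite Hr by exact (tupI_app _ _ _ _ hx hy).
        rewrite Hr by exact (tupI_app _ _ _ _ hx hy').
        rewrite !lmin_app, !lmax_app. f_equal.
        apply L1; auto.
      * pose proof (lmin_lmax x0 xs). pose proof (lmin_lmax z0 zs).
        simpl.
        rewrite Hr by exact (tupI_app _ _ _ _ hx (tupI_app _ _ _ _ hy hz)).
        rewrite Hr by exact (tupI_app _ _ _ _ hx (tupI_app _ _ _ _ hy' hz)).
        rewrite !lmin_app, !lmax_app. f_equal.
        rewrite !min3, !max3. apply L1; auto. apply minmax4; auto.
  - intros v; split.
    + intros [x [hx e]]. exists [x]; split; [apply tup1; exact hx | split; [discriminate | exact e]].
    + intros [l [hl [hne e]]]. destruct l as [|x0 xs]; [contradiction|].
      exists (med a (med (lmin x0 xs) c (lmax x0 xs)) b).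
      pose proof (Lab (lmin x0 xs) (lmax x0 xs)).
      split. unfold inI; lra.
      rewrite Hr1 by (unfold inI; lra). rewrite med_in by lra.
      rewrite <- e, Hr by exact hl. reflexivity.
  - exists f; split; [exact Hcont | split; [exact Hs | exact Hr1]].
  - intros x1 x2 h1 h2 eps heps.
    destruct (Hcont (med a (B c x1 x2) b) (med_bnd a b _ hab) eps heps) as [d [hd hd']].
    exists d; split; auto. intros y1 y2 hy1 hy2 e1 e2.
    rewrite !Hr2 by auto. apply hd'. apply med_bnd; lra.
    apply med_lip; auto using const_lip. unfold B.
    apply med_lip; auto using min_lip, max_lip, const_lip.
  - intros x y hx hy. rewrite !Hr2 by auto. rewrite B_sym. reflexivity.
  - split.
    + intros x x' y hx hx' hy hxx. rewrite !Hr2 by auto.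
      apply (fmono a b); auto; try (apply med_bnd; lra). apply K_mono1; auto.
    + intros x y y' hx hy hy' hyy. rewrite !Hr2 by auto.
      apply (fmono a b); auto; try (apply med_bnd; lra). apply K_mono2; auto.
  - intros x hx. rewrite Hr2, Hr1 by auto. rewrite B_diag. reflexivity.
Qed.

Lemma B_in p q c x y : inI p q c -> inI p q x -> inI p q y -> inI p q (B c x y).
Proof. intros. unfold B. apply med_bnd3; auto using min_bnd, max_bnd. Qed.
Lemma B_low c x y : x <= y -> y <= c -> B c x y = y.
Proof. unfold B; intros; mm. Qed.
Lemma B_high c x y : x <= y -> c <= x -> B c x y = x.
Proof. unfold B; intros; mm. Qed.
Lemma B_mid c x y : x <= c -> c <= y -> B c x y = c.
Proof. unfold B; intros; mm. Qed.

Lemma forward p q a b F : p <= a -> a <= b -> b <= q -> standard p q F ->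
  (preassociative p q F /\ unarily_qri p q F /\
    (exists f : R -> R, cont_on a b f /\ strict_incr_on a b f /\
       forall x, inI p q x -> F [x] = f (med a x b)) /\
    F2_cont p q F /\ F2_symmetric p q F /\ F2_nondecr p q F /\
    (forall x, inI p q x -> F [x; x] = F [x])) ->
  exists (c : R) (f : R -> R), med_repr p q a b F c f.
Proof.
  intros hpa hab hbq Hstd [PA [U [[f [Hc [Hs Hf1]]] [C [S [[N1 N2] D]]]]]].
  assert (inab : forall x, inI a b x -> inI p q x) by (unfold inI; intros; lra).
  assert (F1ab : forall x, inI a b x -> F [x] = f x).
  { intros x hx. rewrite Hf1 by auto. rewrite med_in by exact hx. reflexivity. }
  assert (pa_l : forall u v w, inI p q u -> inI p q v -> inI p q w ->
            F [u] = F [v] -> F [w; u] = F [w; v]).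
  { intros u v w hu hv hw e. pose proof (PA [w] [u] [v] [] (tup1 _ _ _ hw) (tup1 _ _ _ hu)
      (tup1 _ _ _ hv) (Forall_nil _) e). simpl in H. exact H. }
  assert (pa_r : forall u v w, inI p q u -> inI p q v -> inI p q w ->
            F [u] = F [v] -> F [u; w] = F [v; w]).
  { intros u v w hu hv hw e. pose proof (PA [] [u] [v] [w] (Forall_nil _) (tup1 _ _ _ hu)
      (tup1 _ _ _ hv) (tup1 _ _ _ hw) e). simpl in H. exact H. }
  assert (pa2l : forall u v t w, inI p q u -> inI p q v -> inI p q t -> inI p q w ->
            F [u; v] = F [t] -> F [w; u; v] = F [w; t]).
  { intros u v t w hu hv ht hw e. pose proof (PA [w] [u; v] [t] [] (tup1 _ _ _ hw)
      (tup2 _ _ _ _ hu hv) (tup1 _ _ _ ht) (Forall_nil _) e). simpl in H. exact H. }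
  assert (pa2r : forall u v t w, inI p q u -> inI p q v -> inI p q t -> inI p q w ->
            F [u; v] = F [t] -> F [u; v; w] = F [t; w]).
  { intros u v t w hu hv ht hw e. pose proof (PA [] [u; v] [t] [w] (Forall_nil _)
      (tup2 _ _ _ _ hu hv) (tup1 _ _ _ ht) (tup1 _ _ _ hw) e). simpl in H. exact H. }
  assert (ha : inI a b a) by (unfold inI; lra).
  assert (hb : inI a b b) by (unfold inI; lra).
  destruct (proj2 (U (F [a; b]))) as [t [ht et]].
  { exists [a; b]. split; [apply tup2; auto | split; [discriminate | reflexivity]]. }
  set (c := med a t b).
  assert (hc : inI a b c) by (apply med_bnd; exact hab).
  assert (Fc : F [c] = F [a; b]).
  { rewrite F1ab by exact hc. rewrite <- et, Hf1 by exact ht. reflexivity. }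
  assert (Fac : F [a; c] = F [c]).
  { rewrite <- (pa2l a b c a) by auto. rewrite Fc.
    apply (pa2r a a a b); auto. }
  assert (Fcb : F [c; b] = F [c]).
  { rewrite <- (pa2r a b c b) by auto. rewrite Fc.
    apply (pa2l b b b a); auto. }
  assert (Fmono : forall u v, inI a b u -> inI a b v -> u <= v -> F [u] <= F [v]).
  { intros u v hu hv huv. rewrite !F1ab by auto. apply (fmono a b); auto. }
  assert (Bin_ab : forall x y, inI a b x -> inI a b y -> x <= y -> F [x; y] = F [B c x y]).
  { intros x y hx hy hxy.
    destruct (Rle_dec y c) as [hyc|hyc].
    - destruct (ivt a c (fun s => F [a; s]) (F [y])) as [s [hs es]].
      + unfold inI in hc; lra.
      + intros s hs eps heps.
        assert (hs' : inI p q s) by (unfold inI in *; lra).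
        destruct (C a s (inab a ha) hs' eps heps) as [d [hd hd']].
        exists d; split; auto. intros y' hy' hyd. apply hd'; auto.
        unfold inI in *; lra. apply const_lip; auto.
      + simpl. rewrite D by auto. rewrite Fac. split; apply Fmono; auto;
        unfold inI in *; lra.
      + simpl in es.
        assert (hs' : inI a b s) by (unfold inI in *; lra).
        assert (Fay : F [a; y] = F [y]).
        { rewrite <- (pa2l a s y a) by auto. rewrite (pa2r a a a s) by auto. exact es. }
        rewrite B_low by auto. apply Rle_antisym.
        * rewrite <- (D y) by auto. apply N1; auto.
        * rewrite <- Fay. apply N1; auto. unfold inI in hx; lra.
    - destruct (Rle_dec c x) as [hcx|hcx].
      + destruct (ivt c b (fun s => F [s; b]) (F [x])) as [s [hs es]].
        * unfold inI in hc; lra.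
        * intros s hs eps heps.
          assert (hs' : inI p q s) by (unfold inI in *; lra).
          destruct (C s b hs' (inab b hb) eps heps) as [d [hd hd']].
          exists d; split; auto. intros y' hy' hyd. apply hd'; auto.
          unfold inI in *; lra. apply const_lip; auto.
        * simpl. rewrite D by auto. rewrite Fcb. split; apply Fmono; auto;
          unfold inI in *; lra.
        * simpl in es.
          assert (hs' : inI a b s) by (unfold inI in *; lra).
          assert (Fxb : F [x; b] = F [x]).
          { rewrite <- (pa2r s b x b) by auto. rewrite (pa2l b b b s) by auto. exact es. }
          rewrite B_high by auto. apply Rle_antisym.
          -- rewrite <- Fxb. apply N2; auto. unfold inI in hy; lra.
          -- rewrite <- (D x) by auto. apply N2; auto.
      + rewrite B_mid by lra. apply Rle_antisym.
        * rewrite <- Fcb. apply Rle_trans with (F [c; y]).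
          apply N1; auto; lra. apply N2; auto. unfold inI in hy; lra.
        * rewrite <- Fac. apply Rle_trans with (F [x; c]).
          apply N1; auto. unfold inI in hx; lra. apply N2; auto; lra. }
  assert (Bin : forall x y, inI p q x -> inI p q y -> F [x; y] = F [B c x y]).
  { intros x y hx hy.
    assert (hx' : inI a b (med a x b)) by (apply med_bnd; auto).
    assert (hy' : inI a b (med a y b)) by (apply med_bnd; auto).
    assert (ex : F [x] = F [med a x b]) by (rewrite (F1ab _ hx'), (Hf1 x hx); reflexivity).
    assert (ey : F [y] = F [med a y b]) by (rewrite (F1ab _ hy'), (Hf1 y hy); reflexivity).
    rewrite (pa_r x (med a x b) y), (pa_l y (med a y b) (med a x b)) by auto.
    assert (E : F [med a x b; med a y b] = F [B c (med a x b) (med a y b)]).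
    { destruct (Rle_dec (med a x b) (med a y b)).
      - apply Bin_ab; auto.
      - rewrite S by auto. rewrite B_sym. apply Bin_ab; auto; lra. }
    rewrite E. rewrite !Hf1 by (apply B_in; auto).
    rewrite <- L3; auto; unfold inI in hc; lra. }
  assert (Nary : forall xs x0, tupI p q (x0 :: xs) ->
            F (x0 :: xs) = F [med (lmin x0 xs) c (lmax x0 xs)]).
  { induction xs as [|x1 xs IH]; intros x0 ht0.
    - unfold lmin, lmax; simpl. rewrite med_id. reflexivity.
    - inversion ht0 as [|? ? hx0 ht1]; subst. inversion ht1 as [|? ? hx1 hxs]; subst.
      assert (hB : inI p q (B c x0 x1)) by (apply B_in; auto).
      assert (E : F (x0 :: x1 :: xs) = F (B c x0 x1 :: xs)).
      { pose proof (PA [] [x0; x1] [B c x0 x1] xs (Forall_nil _) (tup2 _ _ _ _ hx0 hx1)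
          (tup1 _ _ _ hB) hxs (Bin x0 x1 hx0 hx1)). simpl in H. exact H. }
      rewrite E, IH by (constructor; auto).
      change (lmin x0 (x1 :: xs)) with (lmin (Rmin x0 x1) xs).
      change (lmax x0 (x1 :: xs)) with (lmax (Rmax x0 x1) xs).
      destruct xs as [|y ys].
      + unfold lmin, lmax; simpl. rewrite med_id. reflexivity.
      + rewrite !lmin_cons, !lmax_cons. rewrite L2. reflexivity. }
  exists c, f. split; [exact hc | split; [exact Hc | split; [exact Hs |]]].
  intros x0 xs ht0. rewrite Nary by exact ht0. apply Hf1.
  apply med_bnd3; [apply lmin_in; exact ht0 | apply inab; exact hc | apply lmax_in; exact ht0].
Qed.

Theorem corollary5p9 (p q a b : R) (F : list R -> R) :
  p <= a -> a <= b -> b <= q ->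
  standard p q F ->
  ((preassociative p q F /\ unarily_qri p q F /\
    (exists f : R -> R, cont_on a b f /\ strict_incr_on a b f /\
       forall x, inI p q x -> F [x] = f (med a x b)) /\
    F2_cont p q F /\ F2_symmetric p q F /\ F2_nondecr p q F /\
    (forall x, inI p q x -> F [x; x] = F [x]))
   <->
   (exists (c : R) (f : R -> R), med_repr p q a b F c f))
  /\
  (forall (c : R) (f : R -> R), med_repr p q a b F c f ->
     forall x, inI a b x -> f x = F [x]).
Proof.
  intros hpa hab hbq Hstd. split.
  - split.
    + apply forward; auto.
    + intros [c [f Hr]]. apply (backward p q a b F c f); auto.
  - intros c f [hc [_ [_ Hr]]] x hx.
    rewrite Hr by (apply tup1; unfold inI in *; lra).
    unfold lmin, lmax; simpl. rewrite med_id, med_in by exact hx. reflexivity.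
Qed.
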